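(* Let $A$ be a Cayley--Dickson algebra over a field $F$ and $f(x)\in A[x]$. If $\lambda\in A\setminus F$ is a spherical root of $f(x)$, then $\lambda$ is a root of the companion polynomial $C_f(x)$.
   Context: For an $F$-algebra $B$ with involution and $\gamma\in F^\times$, the Cayley--Dickson double $B\{\gamma\}$ is $B\times B$ with componentwise linear operations, product $(a,b)(c,d)=(ac+\gamma\bar d b,\ da+b\bar c)$ and involution $\overline{(a,b)}=(\bar a,-b)$. Cayley--Dickson algebras over $F$: $A_1=F[\ell_1:\ell_1^2=\ell_1+\mu]$ with $\mu\in F$, $4\mu+1\neq0$, involution $\overline{\alpha+\beta\ell_1}=(\alpha+\beta)-\beta\ell_1$, and $A_{k+1}=A_k\{\gamma_k\}$, $\gamma_k\in F^\times$; $F$ is identified with $F\cdot1$. Trace $\mathrm{tr}(\lambda)=\lambda+\bar\lambda\in F$, norm $\mathrm{n}(\lambda)=\bar\lambda\lambda\in F$, characteristic polynomial $p_\lambda(x)=x^2-\mathrm{tr}(\lambda)x+\mathrm{n}(\lambda)\in F[x]$. The polynomial ring $A[x]=A\otimes_F F[x]$ has central indeterminate $x$; $f(x)=a_mx^m+\dots+a_0$ with $a_k\in A$, products via $(ax^i)(bx^j)=(ab)x^{i+j}$, substitution $f(r)=\sum_k a_k(r^k)$. The involution extends by $\overline{f(x)}=\bar a_mx^m+\dots+\bar a_0$, and the companion polynomial is $C_f(x)=\overline{f(x)}\cdot f(x)$, which lies in $F[x]$ (it is the norm of $f$ in the Cayley--Dickson algebra $A\otimes_F F(x)$). A root $\lambda\in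 A\setminus F$ of $f$ is a spherical root if every $r\in A$ with $p_\lambda(r)=0$ is also a root of $f$. *)

(* Defs.v *)
From HB Require Import structures.
From mathcomp Require Import all_boot all_order all_algebra.
Set Implicit Arguments. Unset Strict Implicit. Unset Printing Implicit Defensive.
Import GRing.Theory.
Local Open Scope ring_scope.

(* Carrier of A_{n+1}: cdT F 0 = A_1 = F[l] (pairs (a,b) = a + b l),
   cdT F (k+1) = cdT F k x cdT F k  (the Cayley--Dickson double). *)
Fixpoint cdT (F : Type) (n : nat) : Type :=
  match n with
  | 0 => (F * F)%type
  | k.+1 => (cdT F k * cdT F k)%type
  end.

Section CD.
Variable F : fieldType.
Variable mu : F.          (* l_1^2 = l_1 + mu *)
Variable gam : nat -> F.  (* gam k is the doubling parameter used for cdT F k.+1 *)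

Fixpoint cd_zero (n : nat) : cdT F n :=
  match n return cdT F n with
  | 0 => (0, 0)
  | k.+1 => (cd_zero k, cd_zero k)
  end.

Fixpoint cd_scal (n : nat) (c : F) : cdT F n :=
  match n return cdT F n with
  | 0 => (c, 0)
  | k.+1 => (cd_scal k c, cd_zero k)
  end.

Definition cd_one (n : nat) : cdT F n := cd_scal n 1.

Fixpoint cd_add (n : nat) : cdT F n -> cdT F n -> cdT F n :=
  match n return cdT F n -> cdT F n -> cdT F n with
  | 0 => fun x y => (x.1 + y.1, x.2 + y.2)
  | k.+1 => fun x y => (cd_add x.1 y.1, cd_add x.2 y.2)
  end.

Fixpoint cd_opp (n : nat) : cdT F n -> cdT F n :=
  match n return cdT F n -> cdT F n with
  | 0 => fun x => (- x.1, - x.2)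
  | k.+1 => fun x => (cd_opp x.1, cd_opp x.2)
  end.

Fixpoint cd_scale (n : nat) (c : F) : cdT F n -> cdT F n :=
  match n return cdT F n -> cdT F n with
  | 0 => fun x => (c * x.1, c * x.2)
  | k.+1 => fun x => (cd_scale c x.1, cd_scale c x.2)
  end.

(* involution: on A_1, conj(a + b l) = (a + b) - b l; on a double, conj(a,b) = (conj a, -b) *)
Fixpoint cd_conj (n : nat) : cdT F n -> cdT F n :=
  match n return cdT F n -> cdT F n with
  | 0 => fun x => (x.1 + x.2, - x.2)
  | k.+1 => fun x => (cd_conj x.1, cd_opp x.2)
  end.

(* product: on A_1, (a + b l)(c + d l) = (ac + mu bd) + (ad + bc + bd) l;
   on a double, (a,b)(c,d) = (ac + gam * conj(d) b, d a + b conj(c)) *)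
Fixpoint cd_mul (n : nat) : cdT F n -> cdT F n -> cdT F n :=
  match n return cdT F n -> cdT F n -> cdT F n with
  | 0 => fun x y => (x.1 * y.1 + mu * (x.2 * y.2),
                     x.1 * y.2 + x.2 * y.1 + x.2 * y.2)
  | k.+1 => fun x y =>
      (cd_add (cd_mul x.1 y.1) (cd_scale (gam k) (cd_mul (cd_conj y.2) x.2)),
       cd_add (cd_mul y.2 x.1) (cd_mul x.2 (cd_conj y.1)))
  end.

Definition cd_sub (n : nat) (x y : cdT F n) : cdT F n := cd_add x (cd_opp y).

(* r^k := r * r^(k-1), r^0 = 1 (CD algebras are power-associative) *)
Fixpoint cd_pow (n : nat) (r : cdT F n) (k : nat) : cdT F n :=
  match k with
  | 0 => cd_one n
  | k'.+1 => cd_mul r (cd_pow r k')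
  end.

Definition cd_sum (n : nat) (s : seq (cdT F n)) : cdT F n :=
  foldr (@cd_add n) (cd_zero n) s.

(* Polynomials in A[x] (central indeterminate) are coefficient lists
   [:: a_0; a_1; ...; a_m].  Substitution f(r) = sum_k a_k (r^k). *)
Definition cd_eval (n : nat) (f : seq (cdT F n)) (r : cdT F n) : cdT F n :=
  cd_sum [seq cd_mul (nth (cd_zero n) f k) (cd_pow r k) | k <- iota 0 (size f)].

Definition cd_root (n : nat) (f : seq (cdT F n)) (r : cdT F n) : Prop :=
  cd_eval f r = cd_zero n.

Definition cd_pconj (n : nat) (f : seq (cdT F n)) : seq (cdT F n) :=
  [seq cd_conj a | a <- f].

Definition cd_pmul (n : nat) (p q : seq (cdT F n)) : seq (cdT F n) :=
  [seq cd_sum [seq cd_mul (nth (cd_zero n) p i) (nth (cd_zero n) q (k - i))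
              | i <- iota 0 k.+1]
  | k <- iota 0 (size p + size q).-1].

Definition companion (n : nat) (f : seq (cdT F n)) : seq (cdT F n) :=
  cd_pmul (cd_pconj f) f.

Definition cd_tr (n : nat) (l : cdT F n) : cdT F n := cd_add l (cd_conj l).
Definition cd_norm (n : nat) (l : cdT F n) : cdT F n := cd_mul (cd_conj l) l.

Definition charpoly_cd (n : nat) (l : cdT F n) : seq (cdT F n) :=
  [:: cd_norm l; cd_opp (cd_tr l); cd_one n].

Definition in_F (n : nat) (l : cdT F n) : Prop := exists c : F, l = cd_scal n c.

Definition spherical_root (n : nat) (f : seq (cdT F n)) (l : cdT F n) : Prop :=
  ~ in_F l /\ cd_root f l /\
  (forall r : cdT F n, cd_root (charpoly_cd l) r -> cd_root f r).

End CD.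

(* Main.v *)
From HB Require Import structures.
Require Import Defs.
From mathcomp Require Import all_boot all_order all_algebra.
From mathcomp Require Import boolp.
From mathcomp Require Import ring zify.
Set Implicit Arguments. Unset Strict Implicit. Unset Printing Implicit Defensive.
Import GRing.Theory.
Local Open Scope ring_scope.

Section Add.
Variable F : fieldType.

Lemma cd_addA n (x y z : cdT F n) : cd_add x (cd_add y z) = cd_add (cd_add x y) z.
Proof.
elim: n x y z => [|k IH] [x1 x2] [y1 y2] [z1 z2] /=; first by congr pair; ring.
by rewrite !IH.
Qed.

Lemma cd_addC n (x y : cdT F n) : cd_add x y = cd_add y x.
Proof.
elim: n x y => [|k IH] [x1 x2] [y1 y2] /=; first by congr pair; ring.
by rewrite IH (IH x2).
Qed.

Lemma cd_add0 n (x : cdT F n) : cd_add (cd_zero F n) x = x.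
Proof.
elim: n x => [|k IH] [x1 x2] /=; first by congr pair; ring.
by rewrite !IH.
Qed.

Lemma cd_addN n (x : cdT F n) : cd_add (cd_opp x) x = cd_zero F n.
Proof.
elim: n x => [|k IH] [x1 x2] /=; first by congr pair; ring.
by rewrite !IH.
Qed.

Lemma cd_scaleA n a b (x : cdT F n) : cd_scale a (cd_scale b x) = cd_scale (a * b) x.
Proof.
elim: n x => [|k IH] [x1 x2] /=; first by congr pair; ring.
by rewrite !IH.
Qed.

Lemma cd_scale1 n (x : cdT F n) : cd_scale 1 x = x.
Proof.
elim: n x => [|k IH] [x1 x2] /=; first by congr pair; ring.
by rewrite !IH.
Qed.

Lemma cd_scaleDr n a (x y : cdT F n) : cd_scale a (cd_add x y) = cd_add (cd_scale a x) (cd_scale a y).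
Proof.
elim: n x y => [|k IH] [x1 x2] [y1 y2] /=; first by congr pair; ring.
by rewrite !IH.
Qed.

Lemma cd_scaleDl n a b (x : cdT F n) : cd_scale (a + b) x = cd_add (cd_scale a x) (cd_scale b x).
Proof.
elim: n x => [|k IH] [x1 x2] /=; first by congr pair; ring.
by rewrite !IH.
Qed.

HB.instance Definition _ n := gen_eqMixin (cdT F n).
HB.instance Definition _ n := gen_choiceMixin (cdT F n).
HB.instance Definition _ n := GRing.isZmodule.Build (cdT F n) (@cd_addA n) (@cd_addC n) (@cd_add0 n) (@cd_addN n).
HB.instance Definition _ n := GRing.Zmodule_isLmodule.Build F (cdT F n) (@cd_scaleA n) (@cd_scale1 n) (@cd_scaleDr n) (fun x a b => @cd_scaleDl n a b x).

Lemma addE n (x y : cdT F n) : cd_add x y = x + y. Proof. by []. Qed.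
Lemma oppE n (x : cdT F n) : cd_opp x = - x. Proof. by []. Qed.
Lemma scaleE n a (x : cdT F n) : cd_scale a x = a *: x. Proof. by []. Qed.
Lemma zeroE n : cd_zero F n = 0. Proof. by []. Qed.
Definition cdE := (addE, oppE, scaleE, zeroE).
Lemma pairD k (x y : cdT F k.+1) : x + y = ((x.1 : cdT F k) + y.1, (x.2 : cdT F k) + y.2). Proof. by []. Qed.
Lemma pairN k (x : cdT F k.+1) : - x = (- (x.1 : cdT F k), - (x.2 : cdT F k)). Proof. by []. Qed.
Lemma pairZ k a (x : cdT F k.+1) : a *: x = (a *: (x.1 : cdT F k), a *: (x.2 : cdT F k)). Proof. by []. Qed.
Lemma pair0 k : (0 : cdT F k.+1) = ((0 : cdT F k), (0 : cdT F k)). Proof. by []. Qed.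

Ltac cdsimp := rewrite -?cdE /= ?cdE.

Lemma conjZD n a (x y : cdT F n) : cd_conj (a *: x + y) = a *: cd_conj x + cd_conj y.
Proof.
elim: n x y => [|k IH] [x1 x2] [y1 y2]; cdsimp; first by congr pair; ring.
by rewrite IH; congr pair; rewrite scalerN opprD.
Qed.
Lemma conjD n (x y : cdT F n) : cd_conj (x + y) = cd_conj x + cd_conj y.
Proof. by have := conjZD 1 x y; rewrite !scale1r. Qed.
Lemma conj0 n : cd_conj (0 : cdT F n) = 0.
Proof. by apply: (addrI (cd_conj (0 : cdT F n))); rewrite -conjD !addr0. Qed.
Lemma conjZ n a (x : cdT F n) : cd_conj (a *: x) = a *: cd_conj x.
Proof. by rewrite -[a *: x]addr0 conjZD conj0 addr0. Qed.
Lemma conjN n (x : cdT F n) : cd_conj (- x) = - cd_conj x.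
Proof. by rewrite -scaleN1r conjZ scaleN1r. Qed.
Lemma conjB n (x y : cdT F n) : cd_conj (x - y) = cd_conj x - cd_conj y.
Proof. by rewrite conjD conjN. Qed.
Lemma conjK n (x : cdT F n) : cd_conj (cd_conj x) = x.
Proof.
elim: n x => [|k IH] [x1 x2]; cdsimp; first by congr pair; ring.
by rewrite IH opprK.
Qed.

Variable mu : F.
Variable gam : nat -> F.
Local Notation mul := (cd_mul mu gam).

Lemma mul_lin n :
  (forall a (x y z : cdT F n), mul (a *: x + y) z = a *: mul x z + mul y z) /\
  (forall a (x y z : cdT F n), mul z (a *: x + y) = a *: mul z x + mul z y).
Proof.
elim: n => [|k [IHl IHr]]; split.
- by move=> a [x1 x2] [y1 y2] [z1 z2]; cdsimp; congr pair; ring.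
- by move=> a [x1 x2] [y1 y2] [z1 z2]; cdsimp; congr pair; ring.
- move=> a [x1 x2] [y1 y2] [z1 z2]; cdsimp; rewrite IHl IHr IHr IHl.
  congr pair; first by rewrite !scalerDr !scalerA [a * _]mulrC addrACA.
  by rewrite scalerDr addrACA.
- move=> a [x1 x2] [y1 y2] [z1 z2]; cdsimp; rewrite IHl conjZD IHl IHr conjZD IHr.
  congr pair; first by rewrite !scalerDr !scalerA [a * _]mulrC addrACA.
  by rewrite scalerDr addrACA.
Qed.
Lemma mulDl n (x y z : cdT F n) : mul (x + y) z = mul x z + mul y z.
Proof. by have := (mul_lin n).1 1 x y z; rewrite !scale1r. Qed.
Lemma mulDr n (x y z : cdT F n) : mul z (x + y) = mul z x + mul z y.
Proof. by have := (mul_lin n).2 1 x y z; rewrite !scale1r. Qed.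
Lemma mul0l n (z : cdT F n) : mul 0 z = 0.
Proof. by apply: (addrI (mul 0 z)); rewrite -mulDl !addr0. Qed.
Lemma mul0r n (z : cdT F n) : mul z 0 = 0.
Proof. by apply: (addrI (mul z 0)); rewrite -mulDr !addr0. Qed.
Lemma mulZl n a (x z : cdT F n) : mul (a *: x) z = a *: mul x z.
Proof. by have := (mul_lin n).1 a x 0 z; rewrite !addr0 mul0l addr0. Qed.
Lemma mulZr n a (x z : cdT F n) : mul z (a *: x) = a *: mul z x.
Proof. by have := (mul_lin n).2 a x 0 z; rewrite !addr0 mul0r addr0. Qed.
Lemma mulNl n (x z : cdT F n) : mul (- x) z = - mul x z.
Proof. by rewrite -scaleN1r mulZl scaleN1r. Qed.
Lemma mulNr n (x z : cdT F n) : mul z (- x) = - mul z x.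
Proof. by rewrite -scaleN1r mulZr scaleN1r. Qed.
Lemma mulBl n (x y z : cdT F n) : mul (x - y) z = mul x z - mul y z.
Proof. by rewrite mulDl mulNl. Qed.
Lemma mulBr n (x y z : cdT F n) : mul z (x - y) = mul z x - mul z y.
Proof. by rewrite mulDr mulNr. Qed.

Local Notation one n := (cd_one F n).

Lemma scalE n c : @cd_scal F n c = c *: one n.
Proof.
rewrite /cd_one; elim: n => [|k IH] /=; first by rewrite -?cdE /=; congr pair; ring.
by rewrite -?cdE /= ?cdE IH scaler0.
Qed.

Lemma conj_one n : cd_conj (one n) = one n.
Proof.
rewrite /cd_one; elim: n => [|k IH]; cdsimp; first by congr pair; ring.
by rewrite IH oppr0.
Qed.

Lemma mul1_both n : (forall x : cdT F n, mul (one n) x = x) /\ (forall x : cdT F n, mul x (one n) = x).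
Proof.
rewrite /cd_one; elim: n => [|k [IHl IHr]]; split => -[x1 x2]; cdsimp; try by congr pair; ring.
  by rewrite ?conj0 ?mul0r ?mul0l ?scaler0 ?addr0 ?add0r -/(cd_one F k) ?conj_one ?IHl ?IHr.
by rewrite ?conj0 ?mul0r ?mul0l ?scaler0 ?addr0 ?add0r -/(cd_one F k) ?conj_one ?IHl ?IHr.
Qed.
Lemma mul1r n (x : cdT F n) : mul (one n) x = x. Proof. exact: (mul1_both n).1. Qed.
Lemma mulr1 n (x : cdT F n) : mul x (one n) = x. Proof. exact: (mul1_both n).2. Qed.
Lemma conj_mul n (x y : cdT F n) : cd_conj (mul x y) = mul (cd_conj y) (cd_conj x).
Proof.
elim: n x y => [|k IH] [x1 x2] [y1 y2]; cdsimp; first by congr pair; ring.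
rewrite conjD conjZ !IH !conjK !conjN !mulNl !mulNr opprK opprD; congr pair; by rewrite addrC.
Qed.

Fixpoint trF n : cdT F n -> F :=
  match n return cdT F n -> F with
  | 0 => fun x => x.1 *+ 2 + x.2
  | k.+1 => fun x => trF x.1
  end.
Fixpoint nF n : cdT F n -> F :=
  match n return cdT F n -> F with
  | 0 => fun x => x.1 ^+ 2 + x.1 * x.2 - mu * x.2 ^+ 2
  | k.+1 => fun x => nF x.1 - gam k * nF x.2
  end.

Lemma conj_tr n (x : cdT F n) : cd_conj x = trF x *: one n - x.
Proof.
rewrite /cd_one; elim: n x => [|k IH] [x1 x2]; cdsimp; first by congr pair; ring.
by rewrite IH scaler0 add0r.
Qed.

Lemma nF0 n : nF (0 : cdT F n) = 0.
Proof. elim: n => [|k IH] /=; rewrite -?cdE /=; first ring. by rewrite ?cdE IH mulr0 subr0. Qed.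

Lemma mul_conj n (x : cdT F n) : mul (cd_conj x) x = nF x *: one n /\ mul x (cd_conj x) = nF x *: one n.
Proof.
rewrite /cd_one; elim: n x => [|k IH] [x1 x2]; cdsimp; first by split; congr pair; ring.
rewrite !conjN !mulNl !mulNr conjK (IH x1).1 (IH x1).2 (IH x2).1 scaler0 -/(cd_one F k).
by split; congr pair; rewrite ?subrr ?addNr // scalerBl scalerN scalerA.

Qed.

Lemma sqrE n (x : cdT F n) : mul x x = trF x *: x - nF x *: one n.
Proof.
have e : x = trF x *: one n - cd_conj x by rewrite conj_tr opprB addrC subrK.
rewrite {1}e mulBl mulZl mul1r (mul_conj x).1; done.
Qed.

Lemma trF_conj n (x : cdT F n) : trF (cd_conj x) = trF x.
Proof. elim: n x => [|k IH] [x1 x2] /=; [rewrite -?cdE /=; ring | exact: IH]. Qed.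

Lemma nF_opp n (x : cdT F n) : nF (- x) = nF x.
Proof.
elim: n x => [|k IH] [x1 x2] /=; rewrite -?cdE /=; first ring.
by rewrite ?cdE !IH.
Qed.

Lemma nF_conj n (x : cdT F n) : nF (cd_conj x) = nF x.
Proof.
elim: n x => [|k IH] [x1 x2] /=; rewrite -?cdE /=; first ring.
by rewrite ?cdE IH nF_opp.
Qed.
Lemma scal_pair k c : @cd_scal F k.+1 c = (@cd_scal F k c, 0 : cdT F k). Proof. by []. Qed.

Lemma conj_scal n c : cd_conj (@cd_scal F n c) = cd_scal n c.
Proof. by rewrite scalE conjZ conj_one. Qed.

Lemma notinF_conj n (l : cdT F n) : ~ in_F l -> ~ in_F (cd_conj l).
Proof. by move=> nl [c hc]; apply: nl; exists c; rewrite -[l]conjK hc conj_scal. Qed.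

Lemma trF_scal n c : trF (@cd_scal F n c) = c *+ 2.
Proof. elim: n => [|k IH] /=; [by rewrite addr0 | exact: IH]. Qed.

Lemma nF_scal n c : nF (@cd_scal F n c) = c ^+ 2.
Proof.
elim: n => [|k IH] /=; first by rewrite mulr0 expr0n /= mulr0 !subr0 addr0.
by rewrite IH -/(0 : cdT F k) nF0 mulr0 subr0.
Qed.

Fixpoint emb n (u : F * F) : cdT F n :=
  match n return cdT F n with
  | 0 => u
  | k.+1 => (emb k u, cd_zero F k)
  end.

Lemma trF_emb n u : trF (emb n u) = trF (n := 0) u.
Proof. by elim: n => [|k IH] //=. Qed.

Lemma nF_emb n u : nF (emb n u) = nF (n := 0) u.
Proof.
elim: n => [|k IH] //=.
by rewrite IH -/(0 : cdT F k) nF0 mulr0 subr0.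
Qed.

Lemma emb_notinF n u : u.2 != 0 -> ~ in_F (emb n u).
Proof.
move=> u2 [c]; elim: n c => [|k IH] c /=; first by case: u u2 => u1 u2 /= u2n [_ e]; rewrite e eqxx in u2n.
case=> e; exact: (IH c e).
Qed.

Definition Kprop n := forall (l a : cdT F n), ~ in_F l ->
  (forall r, trF r = trF l -> nF r = nF l -> mul a r = mul a l) -> a = 0.
Definition KRprop n := forall (l a : cdT F n), ~ in_F l ->
  (forall r, trF r = trF l -> nF r = nF l -> mul r a = mul l a) -> a = 0.

Lemma K_R n : Kprop n -> KRprop n.
Proof.
move=> K l a nl H.
suff e : cd_conj a = 0 by rewrite -[a]conjK e conj0.
apply: (K (cd_conj l)); first exact: notinF_conj.
move=> r tr nr.
have := H (cd_conj r); rewrite trF_conj nF_conj tr nr trF_conj nF_conj => /(_ erefl erefl) e.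
by rewrite -[r]conjK -conj_mul -conj_mul e.
Qed.
Lemma caseA k (hk : gam k != 0) (KR : KRprop k) (l a : cdT F k.+1) :
  ~ in_F l.2 -> (forall r, trF r = trF l -> nF r = nF l -> mul a r = mul a l) -> a = 0.
Proof.
case: l a => l1 l2 [a1 a2] /= nl2 H.
have H1 r : trF r = trF l2 -> nF r = nF l2 ->
    mul r a1 = mul l2 a1 /\ mul (cd_conj r) a2 = mul (cd_conj l2) a2.
  move=> tr nr; have := H (l1, r) erefl; rewrite /= nr => /(_ erefl).
  rewrite -?cdE /= ?cdE => -[e1 e2]; split; first exact: addIr e2.
  exact: (scalerI hk (addrI _ e1)).
suff [-> ->] : (a1 = 0 :> cdT F k) /\ (a2 = 0 :> cdT F k) by [].
split.
  by apply: (KR l2 a1 nl2) => r tr nr; exact: (H1 r tr nr).1.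
apply: (KR (cd_conj l2) a2 (notinF_conj nl2)) => r tr nr.
rewrite trF_conj in tr; rewrite nF_conj in nr.
by have := (H1 (cd_conj r) _ _).2; rewrite conjK; apply; rewrite ?trF_conj ?nF_conj.
Qed.

Lemma Kmain n : 4 * mu + 1 != 0 -> (forall k, (k < n)%N -> gam k != 0) -> Kprop n.
Proof.
elim: n => [|k IH] hmu hg.
  move=> [l1 l2] [a1 a2] nl H.
  have l2n : l2 != 0 by apply/negP=> /eqP e; apply: nl; exists l1; rewrite e.
  have := H (cd_conj ((l1,l2) : cdT F 0)) (trF_conj _) (nF_conj _).
  rewrite -?cdE /= => -[e1 e2].
  suff [-> ->] : a1 = 0 /\ a2 = 0 by [].
  move/eqP: e1; rewrite -subr_eq0 => /eqP e1.
  move/eqP: e2; rewrite -subr_eq0 => /eqP e2.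
  have h1 : (a1 - 2 * mu * a2) * l2 = 0 by rewrite -e1; ring.
  have h2 : (2 * a1 + a2) * l2 = 0 by rewrite -oppr0 -e2; ring.
  move/eqP: h1; rewrite mulf_eq0 (negbTE l2n) orbF => /eqP h1.
  move/eqP: h2; rewrite mulf_eq0 (negbTE l2n) orbF => /eqP h2.
  have h3 : a2 * (4 * mu + 1) = (2 * a1 + a2) - 2 * (a1 - 2 * mu * a2) by ring.
  rewrite h1 h2 mulr0 subr0 in h3.
  have ha2 : a2 = 0 by move/eqP: h3; rewrite mulf_eq0 (negbTE hmu) orbF => /eqP.
  by split=> //; rewrite ha2 mulr0 subr0 in h1.
have Kk := IH hmu (fun j hj => hg j (ltnW hj)).
have KR := K_R Kk.
have hk := hg k (ltnSn k).
move=> [l1 l2] [a1 a2] nl H.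
case: (pselect (in_F l1)) => [[b hb] | nl1].
  case: (pselect (in_F l2)) => [[c hc] | nl2]; last exact: (caseA hk KR (l := (l1, l2)) nl2 H).
  have c0 : c != 0.
    apply/negP => /eqP c0; apply: nl; exists b.
    by rewrite hb hc c0 scal_pair [cd_scal k 0]scalE scale0r.
  have [r0 [nr0 tr0 nf0]] : exists r0 : cdT F k.+1,
      [/\ ~ in_F r0.2, trF r0 = trF ((l1, l2) : cdT F k.+1) & nF r0 = nF ((l1, l2) : cdT F k.+1)].
    case: (eqVneq mu 0) => hm.
      exists ((emb k (b - gam k * c, 2 * gam k * c), emb k (c, - (gam k * c))) : cdT F k.+1); split.
      - by apply: emb_notinF => /=; rewrite oppr_eq0 mulf_neq0.
      - by rewrite /= trF_emb hb trF_scal /=; ring.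
      - by rewrite /= !nF_emb hb hc !nF_scal /= hm; ring.
    exists ((l1, emb k (c, c / mu)) : cdT F k.+1); split.
    - by apply: emb_notinF => /=; rewrite mulf_neq0 // invr_eq0.
    - by [].
    - rewrite /= nF_emb hc nF_scal /=; congr (_ - _ * _); field; exact: hm.
  apply: (caseA hk KR (l := r0) nr0) => r tr nr.
  rewrite (H r); [| by rewrite -tr0 | by rewrite -nf0].
  by rewrite (H r0).
suff [-> ->] : (a1 = 0 :> cdT F k) /\ (a2 = 0 :> cdT F k) by [].
have H1 r : trF r = trF l1 -> nF r = nF l1 ->
    mul a1 r = mul a1 l1 /\ mul a2 (cd_conj r) = mul a2 (cd_conj l1).
  move=> tr nr; have := H (r, l2); rewrite /= tr nr => /(_ erefl erefl).
  rewrite -?cdE /= ?cdE => -[e1 e2]; split; [exact: addIr e1 | exact: addrI e2].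
split.
  by apply: (Kk l1 a1 nl1) => r tr nr; exact: (H1 r tr nr).1.
apply: (Kk (cd_conj l1) a2 (notinF_conj nl1)) => r tr nr.
rewrite trF_conj in tr; rewrite nF_conj in nr.
by have := (H1 (cd_conj r) _ _).2; rewrite conjK; apply; rewrite ?trF_conj ?nF_conj.
Qed.
Fixpoint ab (t N : F) k : F * F :=
  match k with
  | 0 => (1, 0)
  | k'.+1 => (- (N * (ab t N k').2), (ab t N k').1 + t * (ab t N k').2)
  end.

Lemma ab_add t N i j :
  (ab t N (i + j)).1 = (ab t N i).1 * (ab t N j).1 - N * (ab t N i).2 * (ab t N j).2 /\
  (ab t N (i + j)).2 = (ab t N i).1 * (ab t N j).2 + (ab t N i).2 * (ab t N j).1
                       + t * (ab t N i).2 * (ab t N j).2.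
Proof.
elim: i => [|i [IH1 IH2]]; first by rewrite add0n /=; split; ring.
rewrite addSn /= IH1 IH2; split; ring.
Qed.

Lemma pow_ab n (r : cdT F n) k :
  cd_pow mu gam r k = (ab (trF r) (nF r) k).1 *: one n + (ab (trF r) (nF r) k).2 *: r.
Proof.
elim: k => [|k IH] /=; first by rewrite scale1r scale0r addr0.
rewrite IH mulDr !mulZr mulr1 sqrE.
set t := trF r; set N := nF r; set al := (ab t N k).1; set be := (ab t N k).2.
rewrite scalerBr !scalerA scalerDl scaleNr [N * _]mulrC [t * be]mulrC.
by rewrite addrA addrC.
Qed.

Lemma cd_sumE n (s : seq (cdT F n)) : cd_sum s = \sum_(x <- s) x.
Proof. by elim: s => [|x s IH]; rewrite ?big_nil ?big_cons //= -IH. Qed.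

Lemma evalE n (f : seq (cdT F n)) r :
  cd_eval mu gam f r = \sum_(0 <= k < size f) mul f`_k (cd_pow mu gam r k).
Proof. by rewrite /cd_eval cd_sumE big_map /index_iota subn0. Qed.

Lemma mul_suml n I (s : seq I) (P : pred I) (g : I -> cdT F n) r :
  mul (\sum_(i <- s | P i) g i) r = \sum_(i <- s | P i) mul (g i) r.
Proof. by apply: (big_morph (fun x => mul x r)) => [x y|]; rewrite ?mulDl ?mul0l. Qed.

Lemma mul_sumr n I (s : seq I) (P : pred I) (g : I -> cdT F n) r :
  mul r (\sum_(i <- s | P i) g i) = \sum_(i <- s | P i) mul r (g i).
Proof. by apply: (big_morph (fun x => mul r x)) => [x y|]; rewrite ?mulDr ?mul0r. Qed.

Lemma decomp n (g : nat -> cdT F n) (r : cdT F n) M :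
  \sum_(0 <= k < M) mul (g k) (cd_pow mu gam r k) =
  \sum_(0 <= k < M) (ab (trF r) (nF r) k).1 *: g k
  + mul (\sum_(0 <= k < M) (ab (trF r) (nF r) k).2 *: g k) r.
Proof.
rewrite mul_suml -big_split /=; apply: eq_bigr => k _.
by rewrite pow_ab mulDr !mulZr mulr1 mulZl.
Qed.

Lemma triangle (V : zmodType) (h : nat -> nat -> V) K :
  \sum_(0 <= k < K) \sum_(0 <= i < k.+1) h i (k - i)%N =
  \sum_(0 <= i < K) \sum_(0 <= j < (K - i)%N) h i j.
Proof.
elim: K => [|K IH]; first by rewrite !big_geq.
rewrite big_nat_recr //= IH.
have -> : \sum_(0 <= i < K.+1) \sum_(0 <= j < (K.+1 - i)%N) h i j =
          \sum_(0 <= i < K.+1) (\sum_(0 <= j < (K - i)%N) h i j + h i (K - i)%N).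
  by apply: eq_big_nat => i /andP[_ hi]; rewrite subSn // big_nat_recr.
by rewrite big_split /= [X in _ = X + _]big_nat_recr //= subnn [\sum_(0 <= j < 0) h K j]big_geq // addr0.
Qed.
Lemma big_nat0 (V : zmodType) m n (g : nat -> V) :
  (forall i, (m <= i < n)%N -> g i = 0) -> \sum_(m <= i < n) g i = 0.
Proof. by move=> H; rewrite big_nat_cond big1 // => i /andP[hi _]; exact: H. Qed.

Lemma nth_pconj n (f : seq (cdT F n)) i : (cd_pconj f)`_i = cd_conj f`_i.
Proof.
rewrite /cd_pconj; case: (ltnP i (size f)) => hi; first by rewrite (nth_map 0).
by rewrite !nth_default ?size_map // conj0.
Qed.

Lemma size_pconj n (f : seq (cdT F n)) : size (cd_pconj f) = size f.
Proof. exact: size_map. Qed.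

Lemma companionE n (f : seq (cdT F n)) (l : cdT F n) :
  cd_eval mu gam (companion mu gam f) l =
  \sum_(0 <= k < (size f + size f).-1)
     mul (\sum_(0 <= i < k.+1) mul (cd_conj f`_i) f`_(k - i)%N) (cd_pow mu gam l k).
Proof.
rewrite evalE /companion /cd_pmul size_map size_iota size_pconj.
apply: eq_big_nat => k /andP[_ hk].
rewrite (nth_map 0%N) ?size_iota // nth_iota // add0n cd_sumE big_map /index_iota subn0.
congr mul; apply: eq_bigr => i _.
by rewrite nth_pconj.
Qed.

Lemma csum0 n (f : seq (cdT F n)) t N (sel : F * F -> F) (P Q : nat -> F) :
  \sum_(0 <= k < size f) (ab t N k).1 *: f`_k = 0 ->
  \sum_(0 <= k < size f) (ab t N k).2 *: f`_k = 0 ->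
  (forall i j, sel (ab t N (i + j)) = P i * (ab t N j).1 + Q i * (ab t N j).2) ->
  \sum_(0 <= k < (size f + size f).-1)
     sel (ab t N k) *: \sum_(0 <= i < k.+1) mul (cd_conj f`_i) f`_(k - i)%N = 0.
Proof.
move=> hB hA hsel.
set K := (size f + size f).-1.
have -> : \sum_(0 <= k < K) sel (ab t N k) *: \sum_(0 <= i < k.+1) mul (cd_conj f`_i) f`_(k - i)%N =
  \sum_(0 <= k < K) \sum_(0 <= i < k.+1)
     (fun i j => sel (ab t N (i + j)) *: mul (cd_conj f`_i) f`_j) i (k - i)%N.
  apply: eq_bigr => k _; rewrite scaler_sumr; apply: eq_big_nat => i /andP[_ hi].
  by rewrite subnKC.
rewrite (triangle (fun i j => sel (ab t N (i + j)) *: mul (cd_conj f`_i) f`_j)); apply: big_nat0 => i /andP[_ hiK].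
under eq_bigr do rewrite -mulZr.
rewrite -mul_sumr.
case: (ltnP i (size f)) => hif; last by rewrite nth_default // conj0 mul0l.
suff -> : \sum_(0 <= j < (K - i)%N) sel (ab t N (i + j)) *: f`_j = 0 by rewrite mul0r.
have hle : (size f <= K - i)%N by rewrite /K; lia.
rewrite (big_cat_nat _ (n := size f)) //=.
rewrite [X in _ + X]big_nat0 ?addr0; last first.
  by move=> j /andP[hj _]; rewrite nth_default // scaler0.
under eq_bigr do rewrite hsel scalerDl -!scalerA.
by rewrite big_split -!scaler_sumr /= hB hA !scaler0 addr0.
Qed.
End Add.

Unset Implicit Arguments.
Theorem theorem3p13 (F : fieldType) (mu : F) (gam : nat -> F) (n : nat)
    (f : seq (cdT F n)) (lam : cdT F n) :
  4 * mu + 1 != 0 ->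
  (forall k, (k < n)%N -> gam k != 0) ->
  spherical_root mu gam f lam ->
  cd_root mu gam (companion mu gam f) lam.
Proof.
move=> hmu hg [nl [rl hsph]].
set t := trF lam; set N := nF mu gam lam.
set B := \sum_(0 <= k < size f) (ab t N k).1 *: f`_k.
set A := \sum_(0 <= k < size f) (ab t N k).2 *: f`_k.
have evr r : trF r = t -> nF mu gam r = N -> cd_eval mu gam f r = B + cd_mul mu gam A r.
  by move=> tr nr; rewrite evalE decomp tr nr.
have hr r : trF r = t -> nF mu gam r = N -> cd_root mu gam f r.
  move=> tr nr; apply: hsph.
  rewrite /cd_root /cd_eval /charpoly_cd /cd_norm /cd_tr /=.
  rewrite ?cdE !(mulr1 mu gam) (mul1r mu gam) (sqrE mu gam) tr nr (mul_conj mu gam lam).1 conj_tr.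
  rewrite [lam + _]addrC subrK (mulNl mu gam) (mulZl mu gam) (mul1r mu gam) -/t -/N.
  by rewrite addr0 addKr subrr.
have hA : A = 0.
  apply: (Kmain hmu hg nl) => r tr nr.
  apply: (addrI B); rewrite -evr // -evr //.
  by have := hr r tr nr; rewrite /cd_root => ->.
have hB : B = 0.
  by have := rl; rewrite /cd_root evr // hA mul0l addr0.
rewrite /cd_root companionE decomp -/t -/N.
rewrite (@csum0 _ mu gam _ f t N fst (fun i => (ab t N i).1) (fun i => - (N * (ab t N i).2))) //; last first.
  by move=> i j; have [-> _] := ab_add t N i j; ring.
rewrite (@csum0 _ mu gam _ f t N snd (fun i => (ab t N i).2) (fun i => (ab t N i).1 + t * (ab t N i).2)) //; last first.
  by move=> i j; have [_ ->] := ab_add t N i j; ring.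
by rewrite mul0l addr0.
Qed.
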